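(* Let $\alpha,\beta,\theta$ be cost functions of class $C^1$ with $\alpha+\beta=\theta$, and assume $\theta$ is strictly convex. Let $f:\mathbb{R}\to\mathbb{R}$ be a convex function of class $C^1$ that is bounded from below. Then there exist convex functions $f_1,f_2:\mathbb{R}\to\mathbb{R}$ of class $C^1$ with the following properties: - $f=f_1+f_2$; - for all $t>0$, $Q_t^\theta f=Q_t^\alpha f_1+Q_t^\beta f_2$; - on the set $I=\{x\in\mathbb{R}: f'(x)\in\theta'(\mathbb{R})\}$, one has $f_1'=\alpha'\circ(\theta')^{-1}\circ f'$. Concretely, $f_1$ can be taken as $f_1(x)=a+\int_{x_0}^x\alpha'\circ(\theta')^{-1}\circ f'(u)\,du$ on $I$ for a point $x_0\in I$ and any constant $a$, extended affinely outside $I$.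
   Context: A cost function is an even convex function $\theta:\mathbb{R}\to[0,\infty)$ with $\theta(0)=0$. For $t>0$ and $f:\mathbb{R}\to\mathbb{R}$, the Hopf–Lax operator is $$Q_t^\theta f(x)=\inf_{y\in\mathbb{R}}\Big\{f(y)+t\,\theta\Big(\frac{y-x}{t}\Big)\Big\}.$$ For strictly convex $\theta\in C^1$, $(\theta')^{-1}:\theta'(\mathbb{R})\to\mathbb{R}$ denotes the inverse of the strictly increasing map $\theta'$. *)

(* Defs.v *)
From Stdlib Require Import Reals.
Open Scope R_scope.

Definition convex (f : R -> R) : Prop :=
  forall x y l, 0 <= l <= 1 ->
    f (l * x + (1 - l) * y) <= l * f x + (1 - l) * f y.

Definition strictly_convex (f : R -> R) : Prop :=
  forall x y l, x <> y -> 0 < l < 1 ->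
    f (l * x + (1 - l) * y) < l * f x + (1 - l) * f y.

Definition cost_function (th : R -> R) : Prop :=
  (forall x, th (- x) = th x) /\ convex th /\
  (forall x, 0 <= th x) /\ th 0 = 0.

Definition C1_with (f df : R -> R) : Prop :=
  (forall x, derivable_pt_lim f x (df x)) /\ continuity df.

Definition bounded_below (f : R -> R) : Prop :=
  exists m, forall x, m <= f x.

Definition is_inf (E : R -> Prop) (m : R) : Prop :=
  (forall v, E v -> m <= v) /\
  (forall m', (forall v, E v -> m' <= v) -> m' <= m).

(* Q_t^th f (x) = m, i.e. inf_y { f y + t th((y-x)/t) } = m (finite) *)
Definition hopf_lax_is (th : R -> R) (t : R) (f : R -> R) (x m : R) : Prop :=
  is_inf (fun v => exists y, v = f y + t * th ((y - x) / t)) m.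

(* Main.v *)
Require Import Defs.
From Stdlib Require Import Reals Lra Psatz.
From Stdlib Require Import FunctionalExtensionality.
From Coquelicot Require Coquelicot.
Open Scope R_scope.

Module Prim.
Import Coquelicot.Coquelicot.
Lemma antideriv (h : R -> R) : continuity h ->
  exists F, forall x, derivable_pt_lim F x (h x).
Proof.
intros Hc. exists (RInt h 0). intros x.
apply is_derive_Reals.
apply (is_derive_RInt h (RInt h 0) 0 x).
- apply filter_forall. intros b. apply (RInt_correct h 0 b).
  apply (ex_RInt_continuous h 0 b).
  intros z _. apply continuity_pt_filterlim, Hc.
- apply continuity_pt_filterlim, Hc.
Qed.
End Prim.

Lemma conv_supp (g : R -> R) x d : convex g -> derivable_pt_lim g x d ->
  forall y, g x + d * (y - x) <= g y.
Proof.
intros Hc Hd y.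
destruct (Req_dec y x) as [->|Hyx]. { lra. }
destruct (Rle_lt_dec (g x + d * (y - x)) (g y)) as [H|H]; [exact H|exfalso].
set (gap := g x + d * (y - x) - g y).
assert (Hgap : 0 < gap) by (unfold gap; lra).
assert (Hay : 0 < Rabs (y - x)) by (apply Rabs_pos_lt; lra).
destruct (Hd (gap / Rabs (y - x))) as [del Hdel].
{ apply Rdiv_lt_0_compat; lra. }
assert (Hdpos := cond_pos del).
set (l := Rmin 1 (del / (2 * Rabs (y - x)))).
assert (Hl0 : 0 < l).
{ unfold l. apply Rmin_glb_lt; [lra|]. apply Rdiv_lt_0_compat; lra. }
assert (Hl1 : l <= 1) by (unfold l; apply Rmin_l).
assert (Hl2 : l <= del / (2 * Rabs (y - x))) by (unfold l; apply Rmin_r).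
set (h := l * (y - x)).
assert (Hh0 : h <> 0). { unfold h. apply Rmult_integral_contrapositive; split; lra. }
assert (Hhd : Rabs h < del).
{ unfold h. rewrite Rabs_mult, (Rabs_right l) by lra.
  assert (l * Rabs (y-x) <= del/2).
  { apply Rmult_le_compat_r with (r := Rabs (y-x)) in Hl2; [|lra].
    replace (del / (2 * Rabs (y - x)) * Rabs (y - x)) with (del/2) in Hl2 by (field; lra). exact Hl2. }
  lra. }
specialize (Hdel h Hh0 Hhd).
assert (Hconv := Hc y x l (conj (Rlt_le _ _ Hl0) Hl1)).
replace (l * y + (1 - l) * x) with (x + h) in Hconv by (unfold h; ring).
set (q := (g (x + h) - g x) / h) in Hdel.
assert (Hq : q * h = g (x + h) - g x) by (unfold q; field; exact Hh0).
assert (Hq2 : q * (y - x) <= g y - g x).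
{ apply Rmult_le_reg_l with l; [lra|].
  replace (l * (q * (y - x))) with (q * h) by (unfold h; ring). lra. }
assert (Habs : Rabs ((q - d) * (y - x)) < gap).
{ rewrite Rabs_mult.
  apply Rmult_lt_compat_r with (r := Rabs (y - x)) in Hdel; [|lra].
  replace (gap / Rabs (y - x) * Rabs (y - x)) with gap in Hdel by (field; lra). exact Hdel. }
apply Rabs_def2 in Habs. unfold gap in Habs. nra.
Qed.

Lemma supp_mono (g dg : R -> R) : (forall z w, g z + dg z * (w - z) <= g w) ->
  forall a b, a <= b -> dg a <= dg b.
Proof. intros H a b Hab. destruct (Req_dec a b) as [->|Hne]; [lra|].
 pose proof (H a b); pose proof (H b a). nra. Qed.

Lemma mono_supp (g dg : R -> R) : (forall x, derivable_pt_lim g x (dg x)) ->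
  (forall a b, a <= b -> dg a <= dg b) -> forall z w, g z + dg z * (w - z) <= g w.
Proof.
intros Hd Hm z w.
destruct (Rtotal_order z w) as [H|[H|H]].
- destruct (MVT_cor2 g dg z w H (fun c _ => Hd c)) as [c [Hc1 Hc2]].
  assert (dg z <= dg c) by (apply Hm; lra). nra.
- subst; lra.
- destruct (MVT_cor2 g dg w z H (fun c _ => Hd c)) as [c [Hc1 Hc2]].
  assert (dg c <= dg z) by (apply Hm; lra). nra.
Qed.

Lemma supp_convex (g dg : R -> R) : (forall z w, g z + dg z * (w - z) <= g w) -> convex g.
Proof.
intros H x y l Hl. set (z := l * x + (1 - l) * y).
pose proof (H z x) as H1; pose proof (H z y) as H2.
assert (E : l * (dg z * (x - z)) + (1 - l) * (dg z * (y - z)) = 0) by (unfold z; ring).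
assert (l * (g z + dg z * (x - z)) <= l * g x) by (apply Rmult_le_compat_l; lra).
assert ((1-l) * (g z + dg z * (y - z)) <= (1-l) * g y) by (apply Rmult_le_compat_l; lra).
nra.
Qed.

Lemma deriv_zero_min (g : R -> R) a b c d : derivable_pt_lim g c d -> a < c -> c < b ->
  (forall x, a < x -> x < b -> g c <= g x) -> d = 0.
Proof. intros Hd Ha Hb Hm.
 pose (pr := exist (fun l => derivable_pt_abs g c l) d Hd : derivable_pt g c).
 change d with (derive_pt g c pr). eapply deriv_minimum; eauto. Qed.

Lemma dlim_affine a b y : derivable_pt_lim (fun z => a * z + b) y a.
Proof. intros eps Heps. exists (mkposreal 1 Rlt_0_1). intros h Hh _.
 replace ((a * (y + h) + b - (a * y + b)) / h - a) with 0 by (field; exact Hh).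
 rewrite Rabs_R0; exact Heps. Qed.

Lemma lip_cont (p : R -> R) : (forall v w, Rabs (p w - p v) <= Rabs (w - v)) -> continuity p.
Proof. intros H x. unfold continuity_pt, continue_in, limit1_in, limit_in. simpl. unfold R_dist.
 intros eps Heps. exists eps. split; [exact Heps|]. intros x0 [_ Hx0].
 eapply Rle_lt_trans; [apply H|exact Hx0]. Qed.

Lemma hl_min (g dg c dc : R -> R) t x y s : 0 < t ->
  (forall z w, g z + dg z * (w - z) <= g w) ->
  (forall z w, c z + dc z * (w - z) <= c w) ->
  (forall z, c (- z) = c z) -> s = (x - y) / t -> dg y = dc s ->
  hopf_lax_is c t g x (g y + t * c ((y - x) / t)).
Proof.
intros Ht Sg Sc Ec Hs Hd. assert (Htn : t <> 0) by lra. split.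
- intros v [w ->].
  assert (E1 : c ((y - x) / t) = c s) by (rewrite Hs, <- Ec; f_equal; field; exact Htn).
  assert (E2 : c ((w - x) / t) = c ((x - w) / t)) by (rewrite <- Ec; f_equal; field; exact Htn).
  rewrite E1, E2.
  assert (H1 := Sc s ((x - w) / t)).
  assert (H2 := Sg y w).
  assert (E3 : t * (dc s * ((x - w) / t - s)) = dc s * (y - w)) by (rewrite Hs; field; exact Htn).
  assert (H3 : t * (c s + dc s * ((x - w) / t - s)) <= t * c ((x - w) / t)) by (apply Rmult_le_compat_l; lra).
  rewrite Rmult_plus_distr_l, E3 in H3.
  rewrite Hd in H2. nra.
- intros m' Hm'. apply Hm'. exists y. reflexivity.
Qed.

Theorem proposition2p4
  (al be th da db dth f df : R -> R)
  (Hal : cost_function al) (Hbe : cost_function be) (Hth : cost_function th)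
  (Hda : C1_with al da) (Hdb : C1_with be db) (Hdth : C1_with th dth)
  (Hsum : forall x, al x + be x = th x)
  (Hstrict : strictly_convex th)
  (Hfconv : convex f) (Hdf : C1_with f df) (Hfbd : bounded_below f) :
  exists f1 f2 df1 df2 : R -> R,
    convex f1 /\ convex f2 /\ C1_with f1 df1 /\ C1_with f2 df2 /\
    (forall x, f x = f1 x + f2 x) /\
    (forall t, 0 < t -> forall x, exists m1 m2,
        hopf_lax_is al t f1 x m1 /\ hopf_lax_is be t f2 x m2 /\
        hopf_lax_is th t f x (m1 + m2)) /\
    (forall x s, dth s = df x -> df1 x = da s).
Proof.
destruct Hal as [Heal [Hcal [Hpal Hal0]]].
destruct Hbe as [Hebe [Hcbe [Hpbe Hbe0]]].
destruct Hth as [Heth [Hcth [Hpth Hth0]]].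
destruct Hda as [Hda Hcda]. destruct Hdb as [Hdb Hcdb]. destruct Hdth as [Hdth Hcdth].
destruct Hdf as [Hdf Hcdf]. destruct Hfbd as [mf Hmf].
assert (Hsd : forall s, dth s = da s + db s).
{ intro s. assert (Eq : th = fun z => al z + be z)
    by (apply functional_extensionality; intro; rewrite Hsum; reflexivity).
  apply (uniqueness_limite th s). apply Hdth. rewrite Eq.
  exact (derivable_pt_lim_plus al be s _ _ (Hda s) (Hdb s)). }
assert (Sal := fun z => conv_supp al z (da z) Hcal (Hda z)).
assert (Sbe := fun z => conv_supp be z (db z) Hcbe (Hdb z)).
assert (Sth := fun z => conv_supp th z (dth z) Hcth (Hdth z)).
assert (Sf := fun z => conv_supp f z (df z) Hfconv (Hdf z)).
assert (Mda := supp_mono al da Sal).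
assert (Mdb := supp_mono be db Sbe).
assert (Mdf := supp_mono f df Sf).
set (psi := fun s v => da s - Rmax 0 (dth s - v)).
assert (Hex : forall v, {m | is_lub (fun r => exists s, r = psi s v) m}).
{ intro v. apply completeness.
  - exists (Rmax (v - db 0) (da 0)). intros r [s ->]. unfold psi.
    destruct (Rle_dec 0 s) as [Hs|Hs].
    + assert (db 0 <= db s) by (apply Mdb; lra). rewrite Hsd.
      assert (da s + db s - v <= Rmax 0 (da s + db s - v)) by apply Rmax_r.
      assert (v - db 0 <= Rmax (v - db 0) (da 0)) by apply Rmax_l. lra.
    + assert (da s <= da 0) by (apply Mda; lra).
      assert (0 <= Rmax 0 (dth s - v)) by apply Rmax_l.
      assert (da 0 <= Rmax (v - db 0) (da 0)) by apply Rmax_r. lra.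
  - exists (psi 0 v). exists 0. reflexivity. }
set (phi := fun v => proj1_sig (Hex v)).
assert (Hphi : forall v, is_lub (fun r => exists s, r = psi s v) (phi v))
  by (intro v; exact (proj2_sig (Hex v))).
assert (Pub : forall s v, psi s v <= phi v).
{ intros s v. apply (proj1 (Hphi v)). exists s; reflexivity. }
assert (Pleast : forall v M, (forall s, psi s v <= M) -> phi v <= M).
{ intros v M HM. apply (proj2 (Hphi v)). intros r [s ->]. apply HM. }
assert (Pmono : forall v w, v <= w -> phi v <= phi w).
{ intros v w H. apply Pleast. intros s. eapply Rle_trans; [|apply (Pub s w)].
  unfold psi. unfold Rmax. destruct (Rle_dec 0 (dth s - v)); destruct (Rle_dec 0 (dth s - w)); lra. }
assert (Plip : forall v w, v <= w -> phi w <= phi v + (w - v)).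
{ intros v w H. apply Pleast. intros s. assert (Hs := Pub s v).
  unfold psi in *. unfold Rmax in *.
  destruct (Rle_dec 0 (dth s - v)); destruct (Rle_dec 0 (dth s - w)); lra. }
assert (Pkey : forall s0 v, dth s0 = v -> phi v = da s0).
{ intros s0 v Hv. apply Rle_antisym.
  - apply Pleast. intros s. unfold psi. subst v.
    destruct (Rle_dec s s0).
    + assert (da s <= da s0) by (apply Mda; lra).
      assert (0 <= Rmax 0 (dth s - dth s0)) by apply Rmax_l. lra.
    + assert (db s0 <= db s) by (apply Mdb; lra).
      assert (dth s - dth s0 <= Rmax 0 (dth s - dth s0)) by apply Rmax_r.
      pose proof (Hsd s); pose proof (Hsd s0). lra.
  - assert (E : psi s0 v = da s0).
    { unfold psi. subst v. unfold Rmax. destruct (Rle_dec 0 _); lra. }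
    rewrite <- E. apply Pub. }
assert (Pcont : continuity phi).
{ apply lip_cont. intros v w. destruct (Rle_dec v w).
  - assert (phi v <= phi w) by auto. assert (phi w <= phi v + (w - v)) by auto.
    rewrite !Rabs_right by lra. lra.
  - assert (phi w <= phi v) by (apply Pmono; lra).
    assert (phi v <= phi w + (v - w)) by (apply Plip; lra).
    rewrite !Rabs_left1 by lra. lra. }
set (df1 := fun x => phi (df x)).
assert (Hcdf1 : continuity df1) by exact (continuity_comp df phi Hcdf Pcont).
destruct (Prim.antideriv df1 Hcdf1) as [f1 Hf1].
set (f2 := fun x => f x - f1 x). set (df2 := fun x => df x - df1 x).
assert (Hf2 : forall x, derivable_pt_lim f2 x (df2 x)).
{ intro x. exact (derivable_pt_lim_minus f f1 x _ _ (Hdf x) (Hf1 x)). }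
assert (Mdf1 : forall a b, a <= b -> df1 a <= df1 b).
{ intros a b H. apply Pmono, Mdf, H. }
assert (Mdf2 : forall a b, a <= b -> df2 a <= df2 b).
{ intros a b H. unfold df2, df1. assert (df a <= df b) by (apply Mdf; exact H).
  assert (phi (df b) <= phi (df a) + (df b - df a)) by auto. lra. }
assert (Sf1 := mono_supp f1 df1 Hf1 Mdf1). assert (Sf2 := mono_supp f2 df2 Hf2 Mdf2).
assert (Hkey : forall x s, dth s = df x -> df1 x = da s) by (intros x s H; apply Pkey; exact H).
exists f1, f2, df1, df2.
split; [exact (supp_convex _ _ Sf1)|]. split; [exact (supp_convex _ _ Sf2)|].
split; [split; auto|].
split; [split; [auto|exact (continuity_minus _ _ Hcdf Hcdf1)]|].
split; [intro x; unfold f2; ring|]. split; [|exact Hkey].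
intros t Ht x. assert (Htn : t <> 0) by lra.
assert (Hth1 : 0 < th 1).
{ assert (H := Hstrict 1 (Ropp 1) (1/2) ltac:(intro; lra) ltac:(lra)).
  replace (1/2 * 1 + (1 - 1/2) * - (1)) with 0 in H by field. rewrite (Heth 1), Hth0 in H. lra. }
assert (Hgrow : forall u, 1 <= u -> u * th 1 <= th u).
{ intros u Hu. assert (Hu0 : 0 < /u) by (apply Rinv_0_lt_compat; lra).
  assert (Hu1 : /u <= 1) by (rewrite <- Rinv_1; apply Rinv_le_contravar; lra).
  assert (H := Hcth u 0 (/u) (conj (Rlt_le _ _ Hu0) Hu1)).
  replace (/u * u + (1 - /u) * 0) with 1 in H by (field; lra). rewrite Hth0 in H.
  apply Rmult_le_compat_l with (r := u) in H; [|lra].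
  replace (u * (/u * th u + (1 - /u) * 0)) with (th u) in H by (field; lra). exact H. }
set (R0 := Rmax t ((f x - mf) / th 1 + 1)).
assert (HR0t : t <= R0) by apply Rmax_l.
assert (HR0b : (f x - mf) / th 1 + 1 <= R0) by apply Rmax_r.
set (F := fun y => f y + t * th ((- / t) * y + x / t)).
assert (HFd : forall y, derivable_pt_lim F y (df y + t * (dth ((- / t) * y + x / t) * (- / t)))).
{ intro y.
  exact (derivable_pt_lim_plus f _ y _ _ (Hdf y) (derivable_pt_lim_scal _ t y _
     (derivable_pt_lim_comp _ th y _ _ (dlim_affine (-/t) (x/t) y) (Hdth _)))). }
assert (HFc : forall c, continuity_pt F c)
  by (intro c; exact (derivable_continuous_pt F c (exist _ _ (HFd c)))).
assert (HR0t1 : 1 <= R0 / t).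
{ unfold Rdiv. replace 1 with (t * /t) by (field; lra).
  apply Rmult_le_compat_r; [left; apply Rinv_0_lt_compat; lra| lra]. }
assert (Hend : forall y, (y = x + R0 \/ y = x - R0) -> f x < F y).
{ intros y Hy.
  assert (Ey : th ((- / t) * y + x / t) = th (R0 / t)).
  { destruct Hy as [-> | ->].
    - replace (- / t * (x + R0) + x / t) with (- (R0 / t)) by (field; lra). apply Heth.
    - f_equal. field; lra. }
  unfold F. rewrite Ey.
  assert (G := Hgrow _ HR0t1).
  assert (t * (R0 / t * th 1) <= t * th (R0 / t)) by (apply Rmult_le_compat_l; lra).
  assert (t * (R0 / t * th 1) = R0 * th 1) by (field; lra).
  assert (((f x - mf) / th 1 + 1) * th 1 <= R0 * th 1) by (apply Rmult_le_compat_r; lra).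
  assert (((f x - mf) / th 1 + 1) * th 1 = f x - mf + th 1) by (field; lra).
  pose proof (Hmf y). lra. }
destruct (continuity_ab_min F (x - R0) (x + R0) ltac:(lra) (fun c _ => HFc c)) as [ys [Hmin Hys]].
assert (HFx : F x = f x).
{ unfold F. replace (-/t*x + x/t) with 0 by (field; lra). rewrite Hth0. ring. }
assert (Hlt : x - R0 < ys < x + R0).
{ assert (H : F ys <= F x) by (apply Hmin; lra).
  pose proof (Hend (x + R0) (or_introl eq_refl)). pose proof (Hend (x - R0) (or_intror eq_refl)).
  destruct Hys as [[Ha|Ha] [Hb|Hb]]; try (rewrite <- Ha in H; lra); try (rewrite Hb in H; lra); lra. }
assert (Hz := deriv_zero_min F (x - R0) (x + R0) ys _ (HFd ys) (proj1 Hlt) (proj2 Hlt)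
  (fun z Hz1 Hz2 => Hmin z (conj (Rlt_le _ _ Hz1) (Rlt_le _ _ Hz2)))).
set (s := -/t*ys + x/t) in Hz.
assert (Hcrit : df ys = dth s).
{ replace (t * (dth s * - / t)) with (- dth s) in Hz by (field; lra). lra. }
assert (Hs : s = (x - ys)/t) by (unfold s; field; lra).
exists (f1 ys + t * al ((ys - x)/t)), (f2 ys + t * be ((ys - x)/t)).
split; [|split].
- apply (hl_min f1 df1 al da t x ys s); auto.
- apply (hl_min f2 df2 be db t x ys s); auto.
  unfold df2. rewrite (Hkey ys s (eq_sym Hcrit)), Hcrit, Hsd. ring.
- replace (f1 ys + t * al ((ys - x) / t) + (f2 ys + t * be ((ys - x) / t)))
    with (f ys + t * th ((ys - x) / t)) by (unfold f2; rewrite <- Hsum; ring).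
  apply (hl_min f df th dth t x ys s); auto.
Qed.
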